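(* Let $R\subset\mathbb N$ be such that for every minimal distal system $(X,T)$ and every $x\in X$ one has $\inf_{n\in R} d(T^nx,x)=0$. Then for every minimal distal system $(X,T)$, every $x\in X$ and every $\ell\ge1$ one has $\inf_{n\in R}\max_{1\le j\le\ell} d(T^{jn}x,x)=0$.
   Context: A system is a compact metric space $X$ with a homeomorphism $T$; minimal means no proper nonempty closed invariant subset. It is distal if $\inf_{n\in\mathbb Z} d(T^nx,T^nx')>0$ for all $x\ne x'$. *)

(* Defs.v *)
From Stdlib Require Import Reals List ZArith.
Open Scope R_scope.

Record MetricSpace : Type := {
  carrier :> Type;
  mdist : carrier -> carrier -> R;
  dist_nonneg : forall x y, 0 <= mdist x y;
  dist_eq0 : forall x y, mdist x y = 0 <-> x = y;
  dist_sym : forall x y, mdist x y = mdist y x;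
  dist_tri : forall x y z, mdist x z <= mdist x y + mdist y z
}.

Definition is_open {X : MetricSpace} (U : X -> Prop) : Prop :=
  forall x, U x -> exists r, 0 < r /\ forall y, mdist X x y < r -> U y.

Definition is_closed {X : MetricSpace} (A : X -> Prop) : Prop :=
  is_open (fun x => ~ A x).

Definition compact (X : MetricSpace) : Prop :=
  forall (I : Type) (U : I -> X -> Prop),
    (forall i, is_open (U i)) ->
    (forall x, exists i, U i x) ->
    exists l : list I, forall x, exists i, In i l /\ U i x.

Definition continuous {X : MetricSpace} (f : X -> X) : Prop :=
  forall x eps, 0 < eps -> exists delta, 0 < delta /\
    forall y, mdist X x y < delta -> mdist X (f x) (f y) < eps.

Record System : Type := {
  space :> MetricSpace;
  space_compact : compact space;
  T : space -> space;
  Tinv : space -> space;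
  T_cont : continuous T;
  Tinv_cont : continuous Tinv;
  T_Tinv : forall x, T (Tinv x) = x;
  Tinv_T : forall x, Tinv (T x) = x
}.

Definition iterN (S : System) (n : nat) (x : S) : S := Nat.iter n (T S) x.

Definition iterZ (S : System) (n : Z) (x : S) : S :=
  match n with
  | Z0 => x
  | Zpos p => Nat.iter (Pos.to_nat p) (T S) x
  | Zneg p => Nat.iter (Pos.to_nat p) (Tinv S) x
  end.

Definition minimal (S : System) : Prop :=
  forall A : S -> Prop,
    is_closed A ->
    (forall x, A x <-> A (T S x)) ->
    (exists x, A x) ->
    forall x, A x.

Definition distal (S : System) : Prop :=
  forall x x' : S, x <> x' ->
    exists eps, 0 < eps /\ forall n : Z, eps <= mdist S (iterZ S n x) (iterZ S n x').

(** inf_{n in R} f n = 0 for a nonnegative f (written out). *)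
Definition inf_zero_on (Rset : nat -> Prop) (f : nat -> R) : Prop :=
  forall eps, 0 < eps -> exists n, Rset n /\ f n < eps.

Fixpoint max_ret (Sy : System) (x : Sy) (n : nat) (l : nat) : R :=
  match l with
  | O => 0
  | Datatypes.S l' =>
      Rmax (max_ret Sy x n l') (mdist Sy (iterN Sy (Datatypes.S l' * n) x) x)
  end.

(* Main.v *)
Require Import Defs.
From Stdlib Require Import Reals List ZArith Lra Lia Classical ProofIrrelevance PropExtensionality ClassicalEpsilon FunctionalExtensionality.
From mathcomp Require classical_sets.
Open Scope R_scope.

Lemma zorn_sets (T:Type) (P : (T->Prop)->Prop) :
  (forall F : (T->Prop)->Prop, (forall X, F X -> P X) ->
     (forall X Y, F X -> F Y -> (forall t, X t -> Y t) \/ (forall t, Y t -> X t)) ->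
     P (fun t => exists X, F X /\ X t)) ->
  exists A, P A /\ forall B, (forall t, A t -> B t) -> P B -> forall t, B t -> A t.
Proof.
  intros H.
  destruct (classical_sets.Zorn_bigcup (T:=T) (P:=P)) as [A [PA HA]].
  - intros F FP Ftot.
    assert (E : classical_sets.bigcup F (fun X => X) = (fun t => exists X, F X /\ X t)).
    { apply functional_extensionality; intro t. unfold classical_sets.bigcup, classical_sets.mkset.
      apply propositional_extensionality; split.
      - intros [i Fi Xi]; eauto.
      - intros [X [FX Xt]]; exists X; auto. }
    rewrite E. apply H.
    + intros X FX; apply FP; exact FX.
    + intros X Y FX FY. destruct (Ftot X Y FX FY); auto.
  - exists A; split; auto.
    intros B AB PB t Bt. apply NNPP; intro nA.
    apply (HA B); [|exact PB]. split; [exact AB|]. intro BA. apply nA, BA, Bt.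
Qed.

Record isUltra {I : Type} (p : (I -> Prop) -> Prop) : Prop := {
  u_ext : forall A B : I -> Prop, (forall i, A i -> B i) -> p A -> p B;
  u_inter : forall A B : I -> Prop, p A -> p B -> p (fun i => A i /\ B i);
  u_ne : forall A, p A -> exists i, A i;
  u_ultra : forall A : I -> Prop, p A \/ p (fun i => ~ A i)
}.

Definition FIP {I : Type} (G : (I -> Prop) -> Prop) : Prop :=
  forall l : list (I -> Prop), (forall A, In A l -> G A) -> exists i, forall A, In A l -> A i.

Lemma FIP_add {I} (H : (I -> Prop) -> Prop) (C : I -> Prop) :
  (forall l, (forall A, In A l -> H A) -> exists i, (forall A, In A l -> A i) /\ C i) ->
  FIP (fun A => H A \/ A = C).
Proof.
  intros Hc l Hl.
  assert (exists lH, (forall A, In A lH -> H A) /\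
     forall i, (forall A, In A lH -> A i) -> C i -> forall A, In A l -> A i) as [lH [h1 h2]].
  { clear Hc. induction l as [|a l IH].
    - exists nil. split; [intros A []|]. intros i _ _ A [].
    - destruct IH as [lH [h1 h2]]. { intros A HA; apply Hl; right; auto. }
      destruct (Hl a (or_introl eq_refl)) as [Ha|Ha].
      + exists (a :: lH). split.
        * intros A [<-|HA]; auto.
        * intros i Hi Ci A [<-|HA]; [apply Hi; left; auto|].
          apply h2; auto. intros; apply Hi; right; auto.
      + exists lH. split; auto. intros i Hi Ci A [<-|HA]; [subst; auto|]. apply h2; auto. }
  destruct (Hc lH h1) as [i [Hi Ci]]. exists i. apply h2; auto.
Qed.

Lemma ultra_exists {I : Type} (G : (I -> Prop) -> Prop) :
  FIP G -> exists p, isUltra p /\ forall A, G A -> p A.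
Proof.
  intros HG.
  set (P := fun H : (I -> Prop) -> Prop => FIP (fun A => G A \/ H A)).
  destruct (zorn_sets _ P) as [M [PM Mmax]].
  - intros F FP Ftot l Hl.
    assert (Hx : (forall A, In A l -> G A) \/
               exists X, F X /\ forall A, In A l -> G A \/ X A).
    { induction l as [|a l IH].
      - left; intros A [].
      - assert (IHp : forall A, In A l -> G A \/ (exists X, F X /\ X A)) by (intros; apply Hl; right; auto).
        specialize (IH IHp).
        destruct (Hl a (or_introl eq_refl)) as [Ga|[Y [FY Ya]]].
        + destruct IH as [IH'|[X [FX HX]]].
          * left; intros A HA; destruct HA as [HA|HA]; [subst; exact Ga|exact (IH' A HA)].
          * right; exists X; split; [exact FX|].
            intros A HA; destruct HA as [HA|HA]; [subst; left; exact Ga|exact (HX A HA)].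
        + destruct IH as [IH'|[X [FX HX]]].
          * right; exists Y; split; [exact FY|].
            intros A HA; destruct HA as [HA|HA]; [subst; right; exact Ya|left; exact (IH' A HA)].
          * destruct (Ftot X Y FX FY) as [XY|YX].
            -- right; exists Y; split; [exact FY|].
               intros A HA; destruct HA as [HA|HA]; [subst; right; exact Ya|].
               destruct (HX A HA); [left|right]; auto.
            -- right; exists X; split; [exact FX|].
               intros A HA; destruct HA as [HA|HA]; [subst; right; auto|exact (HX A HA)]. }
    destruct Hx as [Hx|[X [FX HX]]].
    + apply HG; auto.
    + apply (FP X FX); auto.
  - assert (GM : forall A, G A -> M A).
    { intros A GA. apply (Mmax (fun A => M A \/ G A)); [auto| |right; exact GA].
      intros l Hl. apply PM. intros X HX. destruct (Hl X HX) as [h|[h|h]]; auto. }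
    assert (FM : FIP M).
    { intros l Hl. apply PM. intros; right; auto. }
    assert (add : forall C, (forall l, (forall A, In A l -> M A) -> exists i, (forall A, In A l -> A i) /\ C i) -> M C).
    { intros C HC. apply (Mmax (fun A => M A \/ A = C)); [auto| |right; auto].
      intros l Hl. apply (FIP_add M C HC). intros A HA. destruct (Hl A HA) as [h|h]; auto. }
    exists M; split; auto.
    split.
    + intros A B AB MA. apply add. intros l Hl.
      destruct (FM (A :: l)) as [i Hi]. { intros X [<-|HX]; auto. }
      exists i; split; auto. intros; apply Hi; right; auto. apply AB, Hi; left; auto.
    + intros A B MA MB. apply add. intros l Hl.
      destruct (FM (A :: B :: l)) as [i Hi]. { intros X [<-|[<-|HX]]; auto. }
      exists i; split. intros; apply Hi; right; right; auto. split; apply Hi; simpl; auto.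
    + intros A MA. destruct (FM (A :: nil)) as [i Hi]. { intros X [<-|[]]; auto. }
      exists i; apply Hi; left; auto.
    + intros A. apply NNPP; intro h. apply not_or_and in h as [h1 h2].
      assert (k : forall C, ~ M C -> exists l, (forall A, In A l -> M A) /\ forall i, (forall A, In A l -> A i) -> ~ C i).
      { intros C nC. apply NNPP; intro h. apply nC, add. intros l Hl.
        apply NNPP; intro h'. apply h. exists l; split; auto.
        intros i Hi Ci. apply h'; eauto. }
      destruct (k _ h1) as [l1 [m1 n1]]. destruct (k _ h2) as [l2 [m2 n2]].
      destruct (FM (l1 ++ l2)) as [i Hi].
      { intros X HX; apply in_app_or in HX as [HX|HX]; auto. }
      apply (n2 i). intros; apply Hi, in_or_app; auto.
      intro nA. apply (n1 i); auto. intros; apply Hi, in_or_app; auto.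
Qed.
Definition PL {M : MetricSpace} {I : Type} (p : (I -> Prop) -> Prop) (f : I -> M) (a : M) : Prop :=
  forall e, 0 < e -> p (fun i => mdist M (f i) a < e).

Lemma u_full {I} (p : (I -> Prop) -> Prop) : isUltra p -> p (fun _ => True).
Proof. intros U. destruct (u_ultra p U (fun _ => True)) as [h|h]; auto.
  apply (u_ext p U _ _ (fun i _ => Logic.I) h). Qed.

Lemma u_not {I} (p : (I -> Prop) -> Prop) A : isUltra p -> p A -> ~ p (fun i => ~ A i).
Proof. intros U h1 h2. destruct (u_ne p U _ (u_inter p U _ _ h1 h2)) as [i [a b]]; auto. Qed.

Lemma PL_unique {M : MetricSpace} {I} (p : (I -> Prop) -> Prop) (f : I -> M) a b :
  isUltra p -> PL p f a -> PL p f b -> a = b.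
Proof.
  intros U Ha Hb. apply Defs.dist_eq0. apply NNPP; intro hne.
  assert (hp : 0 < mdist M a b) by (pose proof (Defs.dist_nonneg M a b); lra).
  set (e := mdist M a b / 2).
  destruct (u_ne p U _ (u_inter p U _ _ (Ha e ltac:(unfold e; lra)) (Hb e ltac:(unfold e; lra)))) as [i [h1 h2]].
  pose proof (Defs.dist_tri M a (f i) b). rewrite (Defs.dist_sym M a (f i)) in H. unfold e in *. lra.
Qed.

Lemma PL_equiv {M : MetricSpace} {I} (p q : (I -> Prop) -> Prop) (f : I -> M) a :
  (forall A, p A -> q A) -> PL p f a -> PL q f a.
Proof. intros h H e he. apply h, H, he. Qed.

Lemma ultra_incl {I} (p q : (I -> Prop) -> Prop) : isUltra p -> isUltra q ->
  (forall A, p A -> q A) -> forall A, q A -> p A.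
Proof.
  intros Up Uq h A qA. destruct (u_ultra p Up A) as [h'|h']; auto.
  exfalso. apply (u_not q A Uq qA). apply h, h'.
Qed.

Lemma u_list {I} (p : (I -> Prop) -> Prop) (U : isUltra p) (l : list (I -> Prop)) :
  (forall A, In A l -> p A) -> p (fun i => forall A, In A l -> A i).
Proof.
  induction l as [|a l IH]; intros H.
  - apply (u_ext p U (fun _ => True)); [intros i _ A []|apply u_full; auto].
  - refine (u_ext p U (fun i => a i /\ forall A, In A l -> A i) _ _ _).
    + intros i [h1 h2] A HA. destruct HA as [HA|HA]; [subst; exact h1|exact (h2 A HA)].
    + apply (u_inter p U a (fun i => forall A, In A l -> A i)).
      * apply H; left; auto.
      * apply IH. intros; apply H; right; auto.
Qed.

Lemma ball_open {M : MetricSpace} (a : M) r : is_open (fun y => mdist M a y < r).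
Proof.
  intros y hy. exists (r - mdist M a y). split; [lra|].
  intros z hz. pose proof (Defs.dist_tri M a y z). lra.
Qed.

Lemma PL_exists {M : MetricSpace} {I} (p : (I -> Prop) -> Prop) (f : I -> M) :
  Defs.compact M -> isUltra p -> exists a, PL p f a.
Proof.
  intros C U. apply NNPP; intro hn.
  assert (hb : forall a, exists e, 0 < e /\ p (fun i => ~ mdist M (f i) a < e)).
  { intros a. apply NNPP; intro h. apply hn. exists a. intros e he.
    destruct (u_ultra p U (fun i => mdist M (f i) a < e)) as [h'|h']; auto.
    exfalso; apply h; exists e; auto. }
  set (Ix := {a : M & {e : R | 0 < e /\ p (fun i => ~ mdist M (f i) a < e)}}).
  destruct (C Ix (fun c y => mdist M (projT1 c) y < proj1_sig (projT2 c))) as [l Hl].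
  - intros c. apply ball_open.
  - intros x. destruct (hb x) as [e [he hp]].
    exists (existT _ x (exist _ e (conj he hp))). simpl. rewrite (proj2 (Defs.dist_eq0 M x x) eq_refl). auto.
  - set (g := fun (c : Ix) (i : I) => ~ mdist M (f i) (projT1 c) < proj1_sig (projT2 c)).
    assert (hp : p (fun i => forall A, In A (map g l) -> A i)).
    { apply u_list; auto. intros A HA. apply in_map_iff in HA as [c [<- _]].
      destruct c as [a [e [he hp]]]; unfold g; simpl; auto. }
    destruct (u_ne p U _ hp) as [i Hi].
    destruct (Hl (f i)) as [c [cin hc]].
    apply (Hi _ (in_map _ _ _ cin)). rewrite Defs.dist_sym; auto.
Qed.

Lemma ultra_compact (M : MetricSpace) :
  (forall p : (M -> Prop) -> Prop, isUltra p -> exists a, PL p (fun y => y) a) -> Defs.compact M.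
Proof.
  intros H Ix U Uo Ucov. apply NNPP; intro hn.
  set (G := fun V : M -> Prop => exists l : list Ix, forall y, (forall i, In i l -> ~ U i y) -> V y).
  destruct (ultra_exists G) as [p [Up Gp]].
  - intros ls Hls.
    assert (exists l : list Ix, forall y, (forall i, In i l -> ~ U i y) -> forall A, In A ls -> A y) as [l Hl].
    { clear hn. induction ls as [|A ls IH].
      - exists nil; intros y _ A [].
      - destruct IH as [l1 H1]. { intros; apply Hls; right; auto. }
        destruct (Hls A (or_introl eq_refl)) as [l2 H2].
        exists (l1 ++ l2). intros y hy B [<-|HB].
        + apply H2; intros i hi; apply hy, in_or_app; auto.
        + apply H1; auto. intros i hi; apply hy, in_or_app; auto. }
    apply NNPP; intro hne. apply hn. exists l. intros x.
    apply NNPP; intro hx. apply hne. exists x. apply Hl. intros i hi hu. apply hx; eauto.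
  - destruct (H p Up) as [a Ha].
    destruct (Ucov a) as [i Ui]. destruct (Uo i a Ui) as [r [hr hU]].
    assert (g : p (fun y => ~ U i y)).
    { apply Gp. exists (i :: nil). intros y hy; apply hy; left; auto. }
    destruct (u_ne p Up _ (u_inter p Up _ _ g (Ha r hr))) as [y [h1 h2]].
    apply h1, hU. rewrite Defs.dist_sym; auto.
Qed.

Lemma PL_of_close {M : MetricSpace} {I} (f : I -> M) (a : M) :
  (forall e, 0 < e -> exists i, mdist M (f i) a < e) -> exists p, isUltra p /\ PL p f a.
Proof.
  intros H.
  destruct (ultra_exists (fun A => exists e, 0 < e /\ forall i, mdist M (f i) a < e -> A i)) as [p [Up Gp]].
  - intros l Hl.
    assert (exists e, 0 < e /\ forall i, mdist M (f i) a < e -> forall A, In A l -> A i) as [e [he Hi]].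
    { induction l as [|A l IH].
      - exists 1; split; [lra|]. intros i _ A [].
      - destruct IH as [e1 [h1 H1]]. { intros; apply Hl; right; auto. }
        destruct (Hl A (or_introl eq_refl)) as [e2 [h2 H2]].
        exists (Rmin e1 e2). split. { apply Rmin_pos; auto. }
        intros i hi B [<-|HB].
        + apply H2. pose proof (Rmin_r e1 e2); lra.
        + apply H1; auto. pose proof (Rmin_l e1 e2); lra. }
    destruct (H e he) as [i hi]. exists i; apply Hi; exact hi.
  - exists p; split; auto. intros e he. apply Gp. exists e; auto.
Qed.
Section Iter.
Variable Sy : System.

Lemma iterZ_ofnat k x : iterZ Sy (Z.of_nat k) x = Nat.iter k (T Sy) x.
Proof. destruct k; simpl; auto. rewrite SuccNat2Pos.id_succ. reflexivity. Qed.

Lemma iterZ_negnat k x : iterZ Sy (- Z.of_nat k)%Z x = Nat.iter k (Tinv Sy) x.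
Proof. destruct k; simpl; auto. rewrite SuccNat2Pos.id_succ. reflexivity. Qed.

Lemma Z_cases (n : Z) : n = Z.of_nat (Z.to_nat n) \/ n = (- Z.of_nat (Z.to_nat (- n)))%Z.
Proof. destruct (Z_le_gt_dec 0 n); [left|right]; lia. Qed.

Lemma iterZ_succ n x : iterZ Sy (Z.succ n) x = T Sy (iterZ Sy n x).
Proof.
  destruct (Z_cases n) as [e|e]; rewrite e.
  - rewrite <- Nat2Z.inj_succ, !iterZ_ofnat. reflexivity.
  - destruct (Z.to_nat (- n)) as [|k] eqn:E.
    + simpl. reflexivity.
    + replace (Z.succ (- Z.of_nat (S k))) with (- Z.of_nat k)%Z by lia.
      rewrite !iterZ_negnat. simpl. rewrite T_Tinv. reflexivity.
Qed.

Lemma iterZ_pred n x : iterZ Sy (Z.pred n) x = Tinv Sy (iterZ Sy n x).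
Proof.
  rewrite <- (Z.succ_pred n) at 2. rewrite iterZ_succ, Tinv_T. reflexivity.
Qed.

Lemma iterZ_add a b x : iterZ Sy (a + b) x = iterZ Sy a (iterZ Sy b x).
Proof.
  revert x. induction a using Z.peano_ind; intros x.
  - reflexivity.
  - replace (Z.succ a + b)%Z with (Z.succ (a + b)) by lia. rewrite !iterZ_succ, IHa. reflexivity.
  - replace (Z.pred a + b)%Z with (Z.pred (a + b)) by lia. rewrite !iterZ_pred, IHa. reflexivity.
Qed.

Lemma iterN_Z k x : iterN Sy k x = iterZ Sy (Z.of_nat k) x.
Proof. rewrite iterZ_ofnat. reflexivity. Qed.

Lemma iter_cont (f : Sy -> Sy) k : Defs.continuous f -> Defs.continuous (Nat.iter k f).
Proof.
  intros Hf. induction k; intros x e he.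
  - exists e; split; auto.
  - simpl. destruct (Hf (Nat.iter k f x) e he) as [d1 [h1 H1]].
    destruct (IHk x d1 h1) as [d2 [h2 H2]]. exists d2; split; auto.
Qed.

Lemma iterZ_cont n : Defs.continuous (iterZ Sy n).
Proof.
  destruct (Z_cases n) as [e|e]; rewrite e; intros x.
  - assert (Hc := iter_cont (T Sy) (Z.to_nat n) (T_cont Sy) x).
    intros ε hε. destruct (Hc ε hε) as [d [hd H]]. exists d; split; auto.
    intros y hy. rewrite !iterZ_ofnat. auto.
  - assert (Hc := iter_cont (Tinv Sy) (Z.to_nat (-n)%Z) (Tinv_cont Sy) x).
    intros ε hε. destruct (Hc ε hε) as [d [hd H]]. exists d; split; auto.
    intros y hy. rewrite !iterZ_negnat. auto.
Qed.

End Iter.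
Definition usum (p q : (Z -> Prop) -> Prop) : (Z -> Prop) -> Prop :=
  fun A => p (fun n => q (fun m => A (n + m)%Z)).

Lemma usum_ultra p q : isUltra p -> isUltra q -> isUltra (usum p q).
Proof.
  intros Up Uq. split; unfold usum.
  - intros A B AB. apply (u_ext p Up). intros n. apply (u_ext q Uq). intros m; apply AB.
  - intros A B hA hB. apply (u_ext p Up _ _ (fun n h => u_inter q Uq _ _ (proj1 h) (proj2 h))).
    apply (u_inter p Up _ _ hA hB).
  - intros A h. destruct (u_ne p Up _ h) as [n hn]. destruct (u_ne q Uq _ hn) as [m hm]. eauto.
  - intros A. destruct (u_ultra p Up (fun n => q (fun m => A (n + m)%Z))) as [h|h]; [left; auto|right].
    refine (u_ext p Up _ _ _ h). intros n hn. simpl in hn.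
    destruct (u_ultra q Uq (fun m => A (n + m)%Z)) as [h'|h']; [contradiction|exact h'].
Qed.

Lemma usum_assoc p q r : isUltra p -> isUltra q -> isUltra r ->
  forall A, usum (usum p q) r A <-> usum p (usum q r) A.
Proof.
  intros Up Uq Ur A. unfold usum. split; apply (u_ext p Up); intros n; apply (u_ext q Uq); intros m;
    apply (u_ext r Ur); intros k; rewrite Z.add_assoc; auto.
Qed.

Lemma usum_congr_r p q q' : isUltra p -> (forall A, q A <-> q' A) ->
  forall A, usum p q A <-> usum p q' A.
Proof.
  intros Up h A. unfold usum. split; apply (u_ext p Up); intros n; apply h.
Qed.

Lemma PL_usum (Sy : System) p q (y z w : Sy) : isUltra p -> isUltra q ->
  PL q (fun m => iterZ Sy m y) z -> PL p (fun n => iterZ Sy n z) w ->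
  PL (usum p q) (fun k => iterZ Sy k y) w.
Proof.
  intros Up Uq Hq Hp e he. unfold usum.
  apply (u_ext p Up (fun n => mdist Sy (iterZ Sy n z) w < e / 2)); [|apply Hp; lra].
  intros n hn. destruct (iterZ_cont Sy n z (e/2) ltac:(lra)) as [d [hd Hd]].
  apply (u_ext q Uq (fun m => mdist Sy (iterZ Sy m y) z < d)); [|apply Hq; auto].
  intros m hm. rewrite iterZ_add.
  assert (h1 := Hd (iterZ Sy m y) ltac:(rewrite Defs.dist_sym; exact hm)).
  pose proof (Defs.dist_tri Sy (iterZ Sy n (iterZ Sy m y)) (iterZ Sy n z) w).
  rewrite Defs.dist_sym in h1. lra.
Qed.

Section Idem.
Variable p : (Z -> Prop) -> Prop.
Hypothesis Up : isUltra p.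

Definition F0 (B : Z -> Prop) : Prop := forall n, p (fun m => B (n + m)%Z).

Definition KK (F : (Z -> Prop) -> Prop) (q : (Z -> Prop) -> Prop) : Prop :=
  isUltra q /\ forall A, F A \/ F0 A -> q A.

Lemma K0_char q : isUltra q -> (forall A, F0 A -> q A) ->
  exists r, isUltra r /\ forall A, q A <-> usum r p A.
Proof.
  intros Uq Hq.
  destruct (ultra_exists (fun A => exists C, q C /\ forall n, p (fun m => C (n + m)%Z) -> A n)) as [r [Ur Hr]].
  - intros l Hl.
    assert (exists C, q C /\ forall n, p (fun m => C (n + m)%Z) -> forall A, In A l -> A n) as [C [qC HC]].
    { induction l as [|A l IH].
      - exists (fun _ => True). split; [apply u_full; auto|]. intros n _ A [].
      - destruct IH as [C1 [q1 H1]]. { intros; apply Hl; right; auto. }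
        destruct (Hl A (or_introl eq_refl)) as [C2 [q2 H2]].
        exists (fun k => C1 k /\ C2 k). split; [apply u_inter; auto|].
        intros n hn B HB. destruct HB as [HB|HB].
        + subst. apply H2. apply (u_ext p Up _ _ (fun m h => proj2 h) hn).
        + apply H1; auto. apply (u_ext p Up _ _ (fun m h => proj1 h) hn). }
    apply NNPP; intro hn.
    assert (F0 (fun k => ~ C k)).
    { intros n. destruct (u_ultra p Up (fun m => C (n + m)%Z)) as [h|h]; auto.
      exfalso; apply hn; exists n; apply HC; exact h. }
    apply (u_not q C Uq qC). apply Hq; auto.
  - exists r; split; auto.
    assert (Us := usum_ultra r p Ur Up).
    assert (inc : forall A, q A -> usum r p A).
    { intros A qA. apply Hr. exists A; split; auto. }
    intros A; split; auto. apply ultra_incl; auto.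
Qed.

Lemma K0_semi q1 q2 : KK (fun _ => False) q1 -> KK (fun _ => False) q2 -> KK (fun _ => False) (usum q1 q2).
Proof.
  intros [U1 H1] [U2 H2]. split; [apply usum_ultra; auto|].
  intros A [[]|hA]. unfold usum.
  apply (u_ext q1 U1 (fun _ => True)); [|apply u_full; auto].
  intros n _. apply H2. right. intros k. 
  apply (u_ext p Up (fun m => A (n + k + m)%Z)); [intros m; rewrite Z.add_assoc; auto|apply hA].
Qed.

Lemma chain_list (G : (Z -> Prop) -> Prop) (F : ((Z -> Prop) -> Prop) -> Prop)
  (Ftot : forall X Y, F X -> F Y -> (forall t, X t -> Y t) \/ (forall t, Y t -> X t))
  (l : list (Z -> Prop)) :
  (forall A, In A l -> G A \/ exists X, F X /\ X A) ->
  (forall A, In A l -> G A) \/ exists X, F X /\ forall A, In A l -> G A \/ X A.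
Proof.
  induction l as [|a l IH]; intros Hl.
  - left; intros A [].
  - assert (IHp : forall A, In A l -> G A \/ (exists X, F X /\ X A)) by (intros; apply Hl; right; auto).
    specialize (IH IHp).
    destruct (Hl a (or_introl eq_refl)) as [Ga|[Y [FY Ya]]].
    + destruct IH as [IH'|[X [FX HX]]].
      * left; intros A HA; destruct HA as [HA|HA]; [subst; exact Ga|exact (IH' A HA)].
      * right; exists X; split; [exact FX|].
        intros A HA; destruct HA as [HA|HA]; [subst; left; exact Ga|exact (HX A HA)].
    + destruct IH as [IH'|[X [FX HX]]].
      * right; exists Y; split; [exact FY|].
        intros A HA; destruct HA as [HA|HA]; [subst; right; exact Ya|left; exact (IH' A HA)].
      * destruct (Ftot X Y FX FY) as [XY|YX].
        -- right; exists Y; split; [exact FY|].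
           intros A HA; destruct HA as [HA|HA]; [subst; right; exact Ya|].
           destruct (HX A HA); [left|right]; auto.
        -- right; exists X; split; [exact FX|].
           intros A HA; destruct HA as [HA|HA]; [subst; right; auto|exact (HX A HA)].
Qed.

Definition PP (F : (Z -> Prop) -> Prop) : Prop :=
  (exists q, KK F q) /\ (forall q1 q2, KK F q1 -> KK F q2 -> KK F (usum q1 q2)).

Lemma KK_list F q : KK F q -> forall l, (forall A, In A l -> F A \/ F0 A) -> q (fun i => forall A, In A l -> A i).
Proof. intros [Uq Hq] l Hl. apply u_list; auto. Qed.

Lemma p_K0 : KK (fun _ => False) p.
Proof. split; auto. intros A [[]|h]. apply (u_ext p Up (fun m => A (0 + m)%Z)); [|apply h]. intros; auto. Qed.

Theorem idempotent_exists : exists r u, isUltra r /\ isUltra u /\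
  (forall A, u A <-> usum r p A) /\ (forall A, usum u u A <-> u A).
Proof.
  destruct (zorn_sets _ PP) as [M [[[u0 Ku0] Msemi] Mmax]].
  - intros F FP Ftot. split.
    + apply ultra_exists. intros l Hl.
      destruct (chain_list F0 F Ftot l) as [h|[X [FX HX]]].
      * intros A HA. destruct (Hl A HA) as [h|h]; auto.
      * destruct (u_ne p Up _ (KK_list _ p p_K0 l (fun A HA => or_intror (h A HA)))) as [i Hi]; eauto.
      * destruct (FP X FX) as [[q Kq] _].
        destruct (u_ne q (proj1 Kq) _ (KK_list _ q Kq l (fun A HA => match HX A HA with or_introl a => or_intror a | or_intror b => or_introl b end))) as [i Hi]; eauto.
    + intros q1 q2 [U1 H1] [U2 H2]. split; [apply usum_ultra; auto|].
      intros A [[X [FX XA]]|hA].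
      * destruct (FP X FX) as [_ S]. apply (S q1 q2).
        -- split; auto. intros B [hB|hB]; apply H1; [left; exists X; auto|right; auto].
        -- split; auto. intros B [hB|hB]; apply H2; [left; exists X; auto|right; auto].
        -- left; auto.
      * assert (K1 : KK (fun _ => False) q1) by (split; auto; intros B [[]|hB]; apply H1; right; auto).
        assert (K2 : KK (fun _ => False) q2) by (split; auto; intros B [[]|hB]; apply H2; right; auto).
        apply (proj2 (K0_semi q1 q2 K1 K2)). right; auto.
  -
    set (G := fun A => forall s, KK M s -> usum s u0 A).
    assert (Uu0 : isUltra u0) by apply (proj1 Ku0).
    assert (image : forall q, KK M q -> (forall A, G A -> q A) -> exists s, KK M s /\ forall A, q A <-> usum s u0 A).
    { intros q [Uq Hq] Gq.
      destruct (ultra_exists (fun A => (M A \/ F0 A) \/ exists C, q C /\ forall n, u0 (fun m => C (n + m)%Z) -> A n)) as [s [Us Hs]].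
      - intros l Hl.
        assert (exists l1 C, (forall B, In B l1 -> M B \/ F0 B) /\ q C /\
                  forall n, (forall B, In B l1 -> B n) -> u0 (fun m => C (n + m)%Z) -> forall A, In A l -> A n)
          as [l1 [C [H1 [qC HC]]]].
        { induction l as [|A l IH].
          - exists nil, (fun _ => True). split; [intros B []|]. split; [apply u_full; auto|]. intros n _ _ A [].
          - destruct IH as [l1 [C [H1 [qC HC]]]]. { intros; apply Hl; right; auto. }
            destruct (Hl A (or_introl eq_refl)) as [hA|[C2 [q2 H2]]].
            + exists (A :: l1), C. split; [intros B [<-|HB]; auto|]. split; auto.
              intros n hn hu B [<-|HB]; [apply hn; left; auto|]. apply HC; auto. intros; apply hn; right; auto.
            + exists l1, (fun k => C k /\ C2 k). split; auto. split; [apply u_inter; auto|].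
              intros n hn hu B HB. destruct HB as [HB|HB].
              * subst. apply H2. apply (u_ext u0 Uu0 _ _ (fun m h => proj2 h) hu).
              * apply HC; auto. apply (u_ext u0 Uu0 _ _ (fun m h => proj1 h) hu). }
        apply NNPP; intro hn.
        assert (GC : G (fun k => ~ C k)).
        { intros s' [Us' Hs']. unfold usum.
          apply (u_ext s' Us' (fun n => forall B, In B l1 -> B n)); [|apply u_list; auto].
          intros n hn'. destruct (u_ultra u0 Uu0 (fun m => C (n + m)%Z)) as [h|h]; auto.
          exfalso; apply hn. exists n. apply HC; auto. }
        apply (u_not q C Uq qC). apply Gq; auto.
      - exists s. split. { split; [exact Us|intros A hA; apply Hs; left; exact hA]. }
        assert (inc : forall A, q A -> usum s u0 A).
        { intros A qA. apply Hs. right. exists A; split; auto. }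
        intros A; split; auto. apply ultra_incl; auto. apply usum_ultra; auto. }
    assert (GM : forall A, G A -> M A).
    { intros A GA. apply (Mmax (fun A => M A \/ G A)); [auto| |right; exact GA].
      split.
      - exists (usum u0 u0). split; [apply usum_ultra; auto|].
        intros B [[hB|hB]|hB].
        + apply (proj2 (Msemi u0 u0 Ku0 Ku0)); auto.
        + apply hB; auto.
        + apply (proj2 (Msemi u0 u0 Ku0 Ku0)); auto.
      - intros q1 q2 [U1 H1] [U2 H2].
        assert (K1 : KK M q1) by (split; auto; intros B [hB|hB]; apply H1; auto).
        assert (K2 : KK M q2) by (split; auto; intros B [hB|hB]; apply H2; auto).
        destruct (image q2 K2 (fun B hB => H2 B (or_introl (or_intror hB)))) as [s [Ks Es]].
        split; [apply usum_ultra; auto|].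
        intros B [[hB|hB]|hB].
        + apply (proj2 (Msemi q1 q2 K1 K2)); auto.
        + apply (usum_congr_r q1 _ _ U1 Es).
          apply (usum_assoc q1 s u0 U1 (proj1 Ks) Uu0).
          apply hB. apply Msemi; auto.
        + apply (proj2 (Msemi q1 q2 K1 K2)); auto. }
    destruct (image u0 Ku0 (fun A hA => proj2 Ku0 A (or_introl (GM A hA)))) as [s0 [Ks0 Es0]].
    set (V := fun q => KK M q /\ forall A, usum q u0 A <-> u0 A).
    set (VV := fun A => forall v, V v -> v A).
    assert (closedV : forall q, KK M q -> (forall A, VV A -> q A) -> V q).
    { intros q Kq Vq. split; auto. intros A. split; [|].
      2:{ intros uA. apply Vq. intros v [Kv Ev]. apply Ev. exact uA. }
      intros h. apply (ultra_incl u0 (usum q u0) Uu0 (usum_ultra q u0 (proj1 Kq) Uu0)); auto.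
      intros B uB. apply Vq. intros v [Kv Ev]. apply Ev. exact uB. }
    assert (VM : forall A, VV A -> M A).
    { intros A VA. apply (Mmax (fun A => M A \/ VV A)); [auto| |right; exact VA].
      split.
      - exists s0. split; [apply (proj1 Ks0)|].
        intros B [[hB|hB]|hB].
        + apply (proj2 Ks0); auto.
        + apply hB. split; auto. intros C. rewrite <- Es0. tauto.
        + apply (proj2 Ks0); auto.
      - intros q1 q2 [U1 H1] [U2 H2].
        assert (K1 : KK M q1) by (split; auto; intros B [hB|hB]; apply H1; auto).
        assert (K2 : KK M q2) by (split; auto; intros B [hB|hB]; apply H2; auto).
        assert (V1 := closedV q1 K1 (fun B hB => H1 B (or_introl (or_intror hB)))).
        assert (V2 := closedV q2 K2 (fun B hB => H2 B (or_introl (or_intror hB)))).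
        assert (K12 := Msemi q1 q2 K1 K2).
        assert (V12 : V (usum q1 q2)).
        { split; auto. intros A'.
          rewrite (usum_assoc q1 q2 u0 U1 U2 Uu0).
          rewrite (usum_congr_r q1 _ _ U1 (proj2 V2)). apply (proj2 V1). }
        split; [apply usum_ultra; auto|].
        intros B [[hB|hB]|hB].
        + apply (proj2 K12); auto.
        + apply hB; auto.
        + apply (proj2 K12); auto. }
    assert (Vu : V u0).
    { apply closedV; auto. intros A hA. apply (proj2 Ku0). left; auto. }
    assert (K0u : KK (fun _ => False) u0) by (split; auto; intros B [[]|hB]; apply (proj2 Ku0); right; auto).
    destruct (K0_char u0 Uu0 (fun A hA => proj2 K0u A (or_intror hA))) as [r [Ur Er]].
    exists r, u0. split; auto. split; auto. split; auto. apply (proj2 Vu).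
Qed.

End Idem.
Theorem distal_return (Sy : System) : distal Sy -> forall (x y : Sy) p, isUltra p ->
  PL p (fun n => iterZ Sy n x) y -> exists r, isUltra r /\ PL r (fun n => iterZ Sy n y) x.
Proof.
  intros Dis x y p Up Hp.
  destruct (idempotent_exists p Up) as [r [u [Ur [Uu [Eu Iu]]]]].
  destruct (PL_exists r (fun n => iterZ Sy n y) (space_compact Sy) Ur) as [z0 Hz0].
  assert (H1 : PL u (fun n => iterZ Sy n x) z0).
  { apply (PL_equiv (usum r p)). { intros A h; apply Eu; exact h. }
    apply (PL_usum Sy r p x y z0); auto. }
  destruct (PL_exists u (fun n => iterZ Sy n z0) (space_compact Sy) Uu) as [z1 Hz1].
  assert (H2 : PL u (fun n => iterZ Sy n x) z1).
  { apply (PL_equiv (usum u u)). { intros A h; apply Iu; exact h. }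
    apply (PL_usum Sy u u x z0 z1); auto. }
  assert (e10 : z1 = z0) by (apply (PL_unique u (fun n => iterZ Sy n x)); auto).
  subst z1.
  assert (ex : x = z0).
  { apply NNPP; intro hne. destruct (Dis x z0 hne) as [eps [he Heps]].
    destruct (u_ne u Uu _ (u_inter u Uu _ _ (H1 (eps/2) ltac:(lra)) (Hz1 (eps/2) ltac:(lra)))) as [n [a b]].
    specialize (Heps n).
    pose proof (Defs.dist_tri Sy (iterZ Sy n x) z0 (iterZ Sy n z0)).
    rewrite (Defs.dist_sym Sy z0) in H. lra. }
  subst z0. exists r; split; auto.
Qed.
Section WSys.
Variable Sy : System.
Variable x0 : Sy.
Variable L : nat.

Fixpoint dm (k : nat) (z z' : nat -> Sy) : R :=
  match k with
  | O => 0
  | S k' => Rmax (dm k' z z') (mdist Sy (z k') (z' k'))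
  end.

Lemma dm_nonneg k z z' : 0 <= dm k z z'.
Proof. induction k; simpl; [lra|]. apply Rle_trans with (dm k z z'); auto. apply Rmax_l. Qed.

Lemma dm_sym k z z' : dm k z z' = dm k z' z.
Proof. induction k; simpl; auto. rewrite IHk, Defs.dist_sym. auto. Qed.

Lemma dm_tri k z y z' : dm k z z' <= dm k z y + dm k y z'.
Proof.
  induction k; simpl; [lra|]. apply Rmax_lub.
  - pose proof (Rmax_l (dm k z y) (mdist Sy (z k) (y k))).
    pose proof (Rmax_l (dm k y z') (mdist Sy (y k) (z' k))). lra.
  - pose proof (Defs.dist_tri Sy (z k) (y k) (z' k)).
    pose proof (Rmax_r (dm k z y) (mdist Sy (z k) (y k))).
    pose proof (Rmax_r (dm k y z') (mdist Sy (y k) (z' k))). lra.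
Qed.

Lemma dm_coord k z z' j : (j < k)%nat -> mdist Sy (z j) (z' j) <= dm k z z'.
Proof.
  induction k; intros h; [lia|]. simpl.
  destruct (Nat.eq_dec j k) as [->|ne]; [apply Rmax_r|].
  apply Rle_trans with (dm k z z'); [apply IHk; lia|apply Rmax_l].
Qed.

Lemma dm_lt k z z' e : 0 < e -> (forall j, (j < k)%nat -> mdist Sy (z j) (z' j) < e) -> dm k z z' < e.
Proof.
  induction k; intros he h; simpl; auto. apply Rmax_lub_lt; auto.
Qed.

Lemma dm_refl k z : dm k z z = 0.
Proof. induction k; simpl; auto. rewrite IHk, (proj2 (Defs.dist_eq0 Sy _ _) eq_refl). apply Rmax_left; lra. Qed.

Definition Sm (n : Z) (z : nat -> Sy) : nat -> Sy :=
  fun j => if Nat.ltb j L then iterZ Sy (Z.of_nat (S j) * n) (z j) else z j.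

Lemma Sm_add a b z : Sm a (Sm b z) = Sm (a + b) z.
Proof.
  apply functional_extensionality; intro j. unfold Sm.
  destruct (Nat.ltb j L); auto. rewrite <- iterZ_add. f_equal. lia.
Qed.

Lemma Sm_0 z : Sm 0 z = z.
Proof. apply functional_extensionality; intro j. unfold Sm. destruct (Nat.ltb j L); auto;
  rewrite Z.mul_0_r; reflexivity. Qed.

Lemma Sm_cont n z e : 0 < e -> exists d, 0 < d /\ forall z', dm L z z' < d -> dm L (Sm n z) (Sm n z') < e.
Proof.
  intros he.
  assert (G : forall k, (k <= L)%nat -> exists d, 0 < d /\ forall z', dm k z z' < d -> dm k (Sm n z) (Sm n z') < e).
  { induction k; intros hk.
    - exists 1; split; [lra|]. intros; simpl; lra.
    - destruct IHk as [d1 [h1 H1]]; [lia|].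
      destruct (iterZ_cont Sy (Z.of_nat (S k) * n) (z k) e he) as [d2 [h2 H2]].
      exists (Rmin d1 d2). split; [apply Rmin_pos; auto|].
      intros z' hz. simpl in hz |- *.
      assert (a1 : dm k z z' < d1).
      { pose proof (Rmax_l (dm k z z') (mdist Sy (z k) (z' k))). pose proof (Rmin_l d1 d2). lra. }
      assert (a2 : mdist Sy (z k) (z' k) < d2).
      { pose proof (Rmax_r (dm k z z') (mdist Sy (z k) (z' k))). pose proof (Rmin_r d1 d2). lra. }
      apply Rmax_lub_lt; auto. unfold Sm. 
      assert (hl : Nat.ltb k L = true) by (apply Nat.ltb_lt; lia). rewrite hl. auto. }
  exact (G L (le_n L)).
Qed.

Definition Dz : nat -> Sy := fun _ => x0.
Definition inY (z : nat -> Sy) : Prop := forall e, 0 < e -> exists n, dm L (Sm n Dz) z < e.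
Definition Wprop (z : nat -> Sy) : Prop := (forall j, (L <= j)%nat -> z j = x0) /\ inY z.
Definition Wc : Type := {z : nat -> Sy | Wprop z}.

Lemma Sm_W n z : Wprop z -> Wprop (Sm n z).
Proof.
  intros [ht hy]. split.
  - intros j hj. unfold Sm. assert (hl : Nat.ltb j L = false) by (apply Nat.ltb_ge; lia). rewrite hl. auto.
  - intros e he. destruct (Sm_cont n z e he) as [d [hd Hd]].
    destruct (hy d hd) as [m hm]. exists (n + m)%Z. rewrite <- Sm_add.
    rewrite dm_sym. apply Hd. rewrite dm_sym. auto.
Qed.

Lemma Wc_eq (a b : Wc) : proj1_sig a = proj1_sig b -> a = b.
Proof. destruct a as [a1 ha]; destruct b as [b1 hb]; simpl; intros e. subst b1. f_equal. apply proof_irrelevance. Qed.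

Lemma dm_eq0 (a b : Wc) : dm L (proj1_sig a) (proj1_sig b) = 0 -> a = b.
Proof.
  intros h. apply Wc_eq. apply functional_extensionality; intro j.
  destruct (Nat.lt_ge_cases j L) as [hj|hj].
  - apply Defs.dist_eq0. pose proof (dm_coord L (proj1_sig a) (proj1_sig b) j hj).
    pose proof (Defs.dist_nonneg Sy (proj1_sig a j) (proj1_sig b j)). lra.
  - rewrite (proj1 (proj2_sig a) j hj), (proj1 (proj2_sig b) j hj). reflexivity.
Qed.

Definition WMS : MetricSpace.
Proof.
  refine {| carrier := Wc; mdist := fun a b => dm L (proj1_sig a) (proj1_sig b) |}.
  - intros; apply dm_nonneg.
  - intros a b; split; [apply dm_eq0|intros ->; apply dm_refl].
  - intros; apply dm_sym.
  - intros; apply dm_tri.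
Defined.

Definition SW (n : Z) (a : Wc) : Wc := exist _ (Sm n (proj1_sig a)) (Sm_W n _ (proj2_sig a)).

Lemma SW_cont n : @Defs.continuous WMS (SW n).
Proof.
  intros a e he. destruct (Sm_cont n (proj1_sig a) e he) as [d [hd Hd]].
  exists d; split; auto. intros b hb. apply Hd. exact hb.
Qed.

Lemma SW_add a b w : SW a (SW b w) = SW (a + b) w.
Proof. apply Wc_eq. simpl. apply Sm_add. Qed.

Lemma SW_0 w : SW 0 w = w.
Proof. apply Wc_eq. simpl. apply Sm_0. Qed.

Lemma W_ball (p : (Wc -> Prop) -> Prop) (Up : isUltra p) (c : nat -> Sy) :
  (forall j, (j < L)%nat -> PL (M := Sy) p (fun a : Wc => proj1_sig a j) (c j)) ->
  forall e, 0 < e -> p (fun a => dm L (proj1_sig a) c < e).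
Proof.
  intros Hc e he.
  assert (G : forall k, (k <= L)%nat -> p (fun a => dm k (proj1_sig a) c < e)).
  { induction k; intros hk.
    - apply (u_ext p Up (fun _ => True)); [intros; simpl; auto|apply u_full; auto].
    - apply (u_ext p Up _ _ (fun a h => Rmax_lub_lt _ _ _ (proj1 h) (proj2 h))).
      apply u_inter; auto. apply IHk; lia. apply Hc; auto; lia. }
  apply G; lia.
Qed.

Lemma W_compact : Defs.compact WMS.
Proof.
  apply ultra_compact. intros p Up.
  assert (hc : forall j, exists cj, (j < L)%nat -> PL (M := Sy) p (fun a : Wc => proj1_sig a j) cj).
  { intros j. destruct (Nat.lt_ge_cases j L) as [h|h].
    - destruct (PL_exists (M := Sy) p (fun a : Wc => proj1_sig a j) (space_compact Sy) Up) as [cj H].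
      exists cj; auto.
    - exists x0; intros; lia. }
  set (c := fun j => if Nat.ltb j L then proj1_sig (constructive_indefinite_description _ (hc j)) else x0).
  assert (Hc : forall j, (j < L)%nat -> PL (M := Sy) p (fun a : Wc => proj1_sig a j) (c j)).
  { intros j hj. unfold c. assert (hl : Nat.ltb j L = true) by (apply Nat.ltb_lt; auto). rewrite hl.
    destruct (constructive_indefinite_description _ (hc j)) as [cj H]; simpl; auto. }
  assert (Wcp : Wprop c).
  { split.
    - intros j hj. unfold c. assert (hl : Nat.ltb j L = false) by (apply Nat.ltb_ge; lia). rewrite hl; auto.
    - intros e he. destruct (u_ne p Up _ (W_ball p Up c Hc (e/2) ltac:(lra))) as [a ha].
      destruct (proj2 (proj2_sig a) (e/2) ltac:(lra)) as [n hn]. exists n.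
      pose proof (dm_tri L (Sm n Dz) (proj1_sig a) c). lra. }
  exists (exist _ c Wcp). intros e he. apply (W_ball p Up c Hc e he).
Qed.

Definition WS : System.
Proof.
  refine {| space := WMS; space_compact := W_compact; T := SW 1; Tinv := SW (-1);
            T_cont := SW_cont 1; Tinv_cont := SW_cont (-1) |}.
  - intros a. simpl. rewrite SW_add. apply SW_0.
  - intros a. simpl. rewrite SW_add. apply SW_0.
Defined.

Lemma iterZ_WS n (a : WS) : iterZ WS n a = SW n a.
Proof.
  induction n using Z.peano_ind.
  - simpl. symmetry. apply SW_0.
  - rewrite iterZ_succ, IHn. simpl. rewrite SW_add. f_equal. lia.
  - rewrite iterZ_pred, IHn. simpl. rewrite SW_add. f_equal. lia.
Qed.

Lemma WS_distal : distal Sy -> distal WS.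
Proof.
  intros D a b hab.
  assert (exists j, (j < L)%nat /\ proj1_sig a j <> proj1_sig b j) as [j [hj hne]].
  { apply NNPP; intro h. apply hab. apply Wc_eq. apply functional_extensionality; intro j.
    destruct (Nat.lt_ge_cases j L) as [hj|hj].
    - apply NNPP; intro h'. apply h; eauto.
    - rewrite (proj1 (proj2_sig a) j hj), (proj1 (proj2_sig b) j hj). reflexivity. }
  destruct (D _ _ hne) as [eps [he H]]. exists eps; split; auto.
  intros n. rewrite !iterZ_WS. simpl.
  eapply Rle_trans; [|apply (dm_coord L _ _ j hj)].
  unfold Sm. assert (hl : Nat.ltb j L = true) by (apply Nat.ltb_lt; auto). rewrite hl. apply H.
Qed.

Definition DW : WS.
Proof.
  refine (exist _ Dz _). split.
  - intros; reflexivity.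
  - intros e he. exists 0%Z. rewrite Sm_0, dm_refl. auto.
Defined.

Lemma WS_minimal : distal Sy -> minimal WS.
Proof.
  intros D. assert (DW' := WS_distal D).
  intros A Acl Ainv [a Aa].
  assert (Ainvn : forall n w, A w -> A (iterZ WS n w)).
  { intros n; induction n using Z.peano_ind; intros w Aw.
    - exact Aw.
    - rewrite iterZ_succ. apply (proj1 (Ainv _)). auto.
    - rewrite iterZ_pred. apply (proj2 (Ainv _)). rewrite T_Tinv. auto. }
  assert (closA : forall w, (forall e, 0 < e -> exists v, A v /\ mdist WS v w < e) -> A w).
  { intros w Hw. apply NNPP; intro nA. destruct (Acl w nA) as [r [hr Hr]].
    destruct (Hw r hr) as [v [Av hv]]. apply (Hr v); auto. rewrite Defs.dist_sym. auto. }
  assert (hD : A DW).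
  { destruct (PL_of_close (M := WS) (fun n => iterZ WS n DW) a) as [p [Up Hp]].
    - intros e he. destruct (proj2 (proj2_sig a) e he) as [n hn]. exists n.
      rewrite iterZ_WS. exact hn.
    - destruct (distal_return WS DW' DW a p Up Hp) as [r [Ur Hr]].
      apply closA. intros e he. destruct (u_ne r Ur _ (Hr e he)) as [n hn].
      exists (iterZ WS n a); split; auto. }
  intros z. apply closA. intros e he. destruct (proj2 (proj2_sig z) e he) as [n hn].
  exists (iterZ WS n DW). split; auto. rewrite iterZ_WS. exact hn.
Qed.

Lemma max_ret_dm n k : (k <= L)%nat -> max_ret Sy x0 n k = dm k (Sm (Z.of_nat n) Dz) Dz.
Proof.
  induction k; intros hk; simpl; auto. rewrite IHk by lia. f_equal.
  unfold Sm, Dz. assert (hl : Nat.ltb k L = true) by (apply Nat.ltb_lt; lia). rewrite hl.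
  rewrite iterN_Z. do 2 f_equal. lia.
Qed.

End WSys.

Theorem mainTheorem5 (Rset : nat -> Prop) :
  (forall (Sy : System) (x : Sy), minimal Sy -> distal Sy ->
     inf_zero_on Rset (fun n => mdist Sy (iterN Sy n x) x)) ->
  forall (Sy : System) (x : Sy) (l : nat), minimal Sy -> distal Sy -> (1 <= l)%nat ->
     inf_zero_on Rset (fun n => max_ret Sy x n l).
Proof.
  intros H Sy x l _ D _ e he.
  destruct (H (WS Sy x l) (DW Sy x l) (WS_minimal Sy x l D) (WS_distal Sy x l D) e he) as [n [Rn hn]].
  exists n; split; auto.
  rewrite (max_ret_dm Sy x l n l (le_n l)).
  rewrite iterN_Z, iterZ_WS in hn. exact hn.
Qed.
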